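(* Let $s\ge1$ and $n\ge k\ge0$ be integers, $\mathcal A$ a linear $[n,k]_q$ code, and $A_n^{\mathcal A}$ the number of codewords of $\mathcal A$ of Hamming weight $n$. Let $\boldsymbol E$ be chosen uniformly at random from the set of matrices in $\mathbb F_q^{s\times n}$ having no all-zero column. Then $$\Pr\{\text{every row of }\boldsymbol E\text{ lies in }\mathcal A\}\le\frac{q^{ks}(q-1)-(q^s-1)(q^k-1-A_n^{\mathcal A})-(q-1)}{(q-1)(q^s-1)^n}.$$ *)

(* Defs.v *)
From HB Require Import structures.
From mathcomp Require Import all_boot all_order all_algebra all_field.
Set Implicit Arguments. Unset Strict Implicit. Unset Printing Implicit Defensive.
Import Order.TTheory GRing.Theory Num.Theory.
Local Open Scope ring_scope.

Definition hweight (F : finFieldType) (n : nat) (c : 'rV[F]_n) : nat :=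
  #|[set j : 'I_n | c 0 j != 0]|.

(* A linear [n,k]_q code is a subspace A of F^n = 'rV[F]_n with \dim A = k. *)
Definition full_weight_count (F : finFieldType) (n : nat)
  (A : {vspace 'rV[F]_n}) : nat :=
  #|[set c : 'rV[F]_n | (c \in A) && (hweight c == n)]|.

Definition no_zero_col (F : finFieldType) (s n : nat) (E : 'M[F]_(s, n)) : bool :=
  [forall j : 'I_n, col j E != 0].

Definition rows_in (F : finFieldType) (s n : nat) (A : {vspace 'rV[F]_n})
  (E : 'M[F]_(s, n)) : bool :=
  [forall i : 'I_s, row i E \in A].

Definition prob_rows_in (F : finFieldType) (s n : nat)
  (A : {vspace 'rV[F]_n}) : rat :=
  (#|[set E : 'M[F]_(s, n) | no_zero_col E && rows_in A E]|)%:R /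
  (#|[set E : 'M[F]_(s, n) | no_zero_col E]|)%:R.

(* Main.v *)
Require Import Defs.
From HB Require Import structures.
From mathcomp Require Import all_boot all_order all_algebra all_field.
From mathcomp Require Import ring lra.
Import Order.TTheory GRing.Theory Num.Theory.
Set Implicit Arguments. Unset Strict Implicit.
Local Open Scope ring_scope.

Lemma alg_main (q g b z an d D X S K : rat) :
  1 < q -> 0 < D -> D <= d -> 0 <= g -> g + b + 1 <= X ->
  (S - 1) * z <= b * (q - 1) -> z + an + 1 = K ->
  g / d <= (X * (q - 1) - (S - 1) * (K - 1 - an) - (q - 1)) / ((q - 1) * D).
Proof.
move=> q1 D0 Dd g0 h1 h2 h3.
have d0 : 0 < d by apply: lt_le_trans Dd.
have -> : K - 1 - an = z by rewrite -h3; ring.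
apply: (@le_trans _ _ (g / D)).
  apply: ler_wpM2l => //; rewrite lef_pV2 ?posrE //.
rewrite invfM mulrA ler_pM2r ?invr_gt0 // ler_pdivlMr ?subr_gt0 //.
nra.
Qed.

Lemma alg_zero (q g d S : rat) :
  1 < q -> q <= S -> 1 <= d -> 0 <= g -> g <= 1 ->
  g / d <= (1 * (q - 1) - (S - 1) * (1 - 1 - 1) - (q - 1)) / ((q - 1) * 1).
Proof.
move=> q1 qS d1 g0 g1.
have d0 : 0 < d by apply: lt_le_trans d1.
apply: (@le_trans _ _ 1).
  by rewrite ler_pdivrMr // mul1r; apply: le_trans d1.
rewrite mulr1 ler_pdivlMr ?subr_gt0 //; lra.
Qed.

Section Count0.
Variables (F : finFieldType) (s n : nat) (A : {vspace 'rV[F]_n}).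
Lemma card_rows_in :
  (#|[set E : 'M[F]_(s, n) | rows_in A E]| <= (#|F| ^ \dim A) ^ s)%N.
Proof.
pose f (E : 'M[F]_(s, n)) := [ffun i => row i E].
have finj : injective f.
  move=> E E' /ffunP h; apply/row_matrixP => i; have := h i; rewrite !ffunE.
  done.
rewrite -(card_imset _ finj) -card_vspace -[s in (_ ^ s)%N]card_ord -card_ffun_on.
apply: subset_leq_card; apply/subsetP => y /imsetP [E]; rewrite inE => /forallP hE -> {y}.
by apply/ffun_onP => i; rewrite ffunE.
Qed.

Lemma card_nzc :
  ((#|F| ^ s).-1 ^ n <= #|[set E : 'M[F]_(s, n) | no_zero_col E]|)%N.
Proof.
pose h (f : {ffun 'I_n -> 'cV[F]_s}) : 'M[F]_(s, n) := \matrix_(i, j) f j i 0.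
have hinj : injective h.
  move=> f f' hf; apply/ffunP => j; apply/colP => i.
  by have := congr1 (fun M : 'M[F]_(s,n) => M i j) hf; rewrite !mxE.
have -> : (#|F| ^ s).-1 = #|predC1 (0 : 'cV[F]_s)|.
  by rewrite cardC1 card_mx muln1.
rewrite -[n in (_ ^ n)%N]card_ord -card_ffun_on -(card_imset _ hinj).
apply: subset_leq_card; apply/subsetP => y /imsetP [f] /ffun_onP hf -> {y}.
rewrite inE; apply/forallP => j.
have -> : col j (h f) = f j by apply/colP => i; rewrite !mxE.
exact: hf.
Qed.

End Count0.

Section Count.
Variables (F : finFieldType) (s n : nat) (A : {vspace 'rV[F]_n}).

Definition Zset := [set c : 'rV[F]_n | [&& c \in A, c != 0 & hweight c != n]].

Lemma hweight0 : hweight (0 : 'rV[F]_n) = 0%N.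
Proof.
rewrite /hweight (_ : [set j | _] = set0) ?cards0 //.
by apply/setP => j; rewrite !inE mxE eqxx.
Qed.

Lemma card_Z : (0 < n)%N ->
  (#|Zset| + full_weight_count A + 1 = #|F| ^ \dim A)%N.
Proof.
move=> n0.
rewrite -card_vspace -(cardsE (mem A)).
set S := [set x in mem A].
set W := [set c : 'rV[F]_n | hweight c == n].
have e1 : #|Zset| = #|S :\ 0 :\: W|.
  apply: eq_card => c; rewrite !inE; by apply/and3P/and3P => -[x y z].
have e2 : full_weight_count A = #|(S :\ 0) :&: W|.
  rewrite /full_weight_count; apply: eq_card => c; rewrite !inE.
  case: (c =P 0) => [->|_]; last by rewrite andbC.
  by rewrite hweight0 mem0v /=; apply/eqP => h; move: n0; rewrite -h.
rewrite [#|S|](cardsD1 0) inE mem0v -(cardsID W (S :\ 0)) e1 e2 /=.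
by rewrite addnC [(_ + #|_ :\: _|)%N]addnC addnA.
Qed.

Lemma mulE (a : 'cV[F]_s) (c : 'rV[F]_n) i j : (a *m c) i j = a i 0 * c 0 j.
Proof. by rewrite !mxE big_ord1. Qed.

Lemma nz_entry m p (M : 'M[F]_(m, p)) : M != 0 -> exists i j, M i j != 0.
Proof.
move=> hM.
case: (pickP (fun ij : 'I_m * 'I_p => M ij.1 ij.2 != 0)) => [[i j] h|h].
  by exists i, j.
move/eqP: hM => []; apply/matrixP => i j; rewrite mxE.
by have /negbFE/eqP := h (i, j).
Qed.

Lemma zero_entry (c : 'rV[F]_n) : hweight c != n -> exists j, c 0 j == 0.
Proof.
move=> hw; case: (pickP (fun j => c 0 j == 0)) => [j h|h]; first by exists j.
move/eqP: hw => []; rewrite /hweight (_ : [set j | _] = setT) ?cardsT ?card_ord //.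
by apply/setP => j; rewrite !inE h.
Qed.

Definition Bad0 :=
  [set E : 'M[F]_(s, n) | [&& rows_in A E, ~~ no_zero_col E & E != 0]].

Lemma card_inj : ((#|F| ^ s).-1 * #|Zset| <= #|Bad0| * #|F|.-1)%N.
Proof.
pose pj (c : 'rV[F]_n) := [pick j | c 0 j != 0].
pose phi (p : 'cV[F]_s * 'rV[F]_n) :=
  (p.1 *m p.2, oapp (fun j => p.2 0 j) 0 (pj p.2)).
pose D := setX [set a : 'cV[F]_s | a != 0] Zset.
have cD : #|D| = ((#|F| ^ s).-1 * #|Zset|)%N.
  rewrite cardsX; congr (_ * _)%N.
  by rewrite -[s in (_ ^ s)%N]muln1 -card_mx -(cardC1 (0 : 'cV[F]_s)); apply: eq_card => a; rewrite !inE.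
have cC : #|setX Bad0 [set x : F | x != 0]| = (#|Bad0| * #|F|.-1)%N.
  by rewrite cardsX -(cardC1 (0 : F)); congr (_ * _)%N; apply: eq_card => a; rewrite !inE.
rewrite -cD -cC -(@card_in_imset _ _ phi).
  apply: subset_leq_card; apply/subsetP => y /imsetP [[a c]].
  rewrite !inE /= => /andP [a0 /and3P [cA c0 cw]] -> {y}; rewrite /phi /=.
  apply/andP; split; first (apply/and3P; split).
  - apply/forallP => i.
    have -> : row i (a *m c) = a i 0 *: c by apply/rowP => j; rewrite !mxE big_ord1.
    exact: memvZ.
  - have [j hj] := zero_entry cw.
    rewrite negb_forall; apply/existsP; exists j; rewrite negbK; apply/eqP/colP => i.
    by rewrite mxE mulE (eqP hj) mulr0 mxE.
  - have [i [i0 hi]] := nz_entry a0; have [j0 [j hj]] := nz_entry c0.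
    rewrite (ord1 i0) in hi; rewrite (ord1 j0) in hj.
    apply/eqP => h; have := congr1 (fun M : 'M[F]_(s, n) => M i j) h.
    by rewrite mulE mxE; apply/eqP; rewrite mulf_neq0.
  - rewrite /pj; case: pickP => [j /= hj | h] //=.
    have [j0 [j hj]] := nz_entry c0; rewrite (ord1 j0) in hj.
    by have := h j; rewrite hj.
move=> [a c] [a' c']; rewrite !inE /= => /andP [a0 /and3P [_ c0 _]].
move=> /andP [a'0 /and3P [_ c'0 _]] [hE hv].
have hij : forall i j, a i 0 * c 0 j = a' i 0 * c' 0 j.
  by move=> i j; rewrite -!mulE hE.
have [i [i0 hi]] := nz_entry a0; have [i' [i0' hi']] := nz_entry a'0.
rewrite (ord1 i0) in hi; rewrite (ord1 i0') in hi'.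
have supp : forall j, (c 0 j != 0) = (c' 0 j != 0).
  move=> j; apply/idP/idP => h.
    have : a i 0 * c 0 j != 0 by rewrite mulf_neq0.
    by rewrite hij mulf_eq0 negb_or => /andP [].
  have : a' i' 0 * c' 0 j != 0 by rewrite mulf_neq0.
  by rewrite -hij mulf_eq0 negb_or => /andP [].
have pe : pj c = pj c' by apply: eq_pick => j; exact: supp j.
case hp: (pj c) => [j0|]; last first.
  have [k0 [j hj]] := nz_entry c0; rewrite (ord1 k0) in hj.
  by move: hp; rewrite /pj; case: pickP => // /(_ j); rewrite hj.
have hj0 : c 0 j0 != 0.
  by move: hp; rewrite /pj; case: pickP => // j hj [<-].
rewrite /= -pe hp /= in hv.
have aa : a = a'.
  apply/colP => k; apply: (mulIf hj0); rewrite [X in _ = _ * X]hv; exact: hij.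
subst a'; congr (_, _); apply/rowP => j; apply: (mulfI hi); exact: hij.
Qed.
End Count.

Section Part.
Variables (F : finFieldType) (s n : nat) (A : {vspace 'rV[F]_n}).

Lemma part : (0 < n)%N ->
  (#|[set E : 'M[F]_(s, n) | no_zero_col E && rows_in A E]| + #|Bad0 s A| + 1
    <= #|[set E : 'M[F]_(s, n) | rows_in A E]|)%N.
Proof.
move=> n0.
set R := [set E : 'M[F]_(s, n) | rows_in A E].
set D := [set E : 'M[F]_(s, n) | no_zero_col E].
rewrite -(cardsID D R).
have -> : #|[set E : 'M[F]_(s, n) | no_zero_col E && rows_in A E]| = #|R :&: D|.
  by apply: eq_card => E; rewrite !inE andbC.
rewrite -addnA leq_add2l [#|R :\: D|](cardsD1 0).
have -> : (0 : 'M[F]_(s, n)) \in R :\: D.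
  rewrite !inE; apply/andP; split.
    rewrite negb_forall; apply/existsP; exists (Ordinal n0).
    by rewrite negbK; apply/eqP/colP => i; rewrite !mxE.
  by apply/forallP => i; rewrite (_ : row i 0 = 0) ?mem0v //; apply/rowP => j; rewrite !mxE.
rewrite addnC leq_add2l; apply: subset_leq_card; apply/subsetP => E.
by rewrite !inE => /and3P [-> -> ->].
Qed.

End Part.

Theorem mainTheorem18 (F : finFieldType) (s n k : nat)
  (A : {vspace 'rV[F]_n}) :
  (1 <= s)%N -> (k <= n)%N -> \dim A = k ->
  let q : rat := (#|F|)%:R in
  let An : rat := (full_weight_count A)%:R in
  prob_rows_in s A <=
    (q ^+ (k * s) * (q - 1) - (q ^+ s - 1) * (q ^+ k - 1 - An) - (q - 1))
    / ((q - 1) * (q ^+ s - 1) ^+ n).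
Proof.
move=> s1 kn dimA; rewrite /=.
set q : rat := (#|F|)%:R.
set An : rat := (full_weight_count A)%:R.
rewrite /prob_rows_in.
have Q1 : (1 < #|F|)%N := finNzRing_gt1 F.
have q1 : 1 < q by rewrite /q ltr1n.
have qS : q <= q ^+ s by apply: ler_eXnr => //; apply: ltW.
have hd := card_nzc F s n.
have [n0|npos] := posnP n.
  subst n; have k0 : k = 0%N by apply/eqP; rewrite -leqn0.
  subst k.
  have hAn : An = 1.
    rewrite /An /full_weight_count (_ : [set c | _] = setT) ?cardsT ?card_mx //.
    apply/setP => c; rewrite !inE (thinmx0 c) mem0v /=.
    by rewrite -leqn0 /hweight (leq_trans (max_card _)) ?card_ord.
  rewrite hAn k0 mul0n !expr0.
  apply: alg_zero => //.
  - by rewrite ler1n; rewrite expn0 in hd.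
  - by rewrite (_ : (1:rat) = 1%:R) // ler_nat (leq_trans (max_card _)) // card_mx muln0.
have cz := card_Z A npos.
have ci := card_inj s A.
have cp := part s A npos.
have cr := card_rows_in s A.
apply: (@alg_main q _ (#|Bad0 s A|)%:R (#|Zset A|)%:R) => //.
- rewrite exprn_gt0 // subr_gt0; exact: lt_le_trans qS.
- move: hd; rewrite -(ler_nat rat) natrX -subn1 natrB ?expn_gt0 ?(ltnW Q1) // natrX //.
- move: (leq_trans cp cr); rewrite -(ler_nat rat) -expnM dimA !natrD natrX //.
- move: ci; rewrite -(ler_nat rat) !natrM -!subn1 !natrB ?expn_gt0 ?(ltnW Q1) // natrX; apply.
- by rewrite /An /q -dimA -natrX -cz !natrD.
Qed.
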